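(* Let $(Z,M,\mu)$ be a measure space with a non-trivial atomless measure $\mu$, and let $2 < a < b < \infty$. Let $\psi:(a,b)\to(0,\infty]$ be a generating function with $\inf_{p\in(a,b)}\psi(p)>0$, and let $G\psi = G\psi[a,b]$ be the associated Grand Lebesgue Space with norm $\|f\|G\psi = \sup_{p\in(a,b)} \|f\|_p/\psi(p)$. For $u\in G\psi$ put $$\theta[G\psi[a,b]](u) := \inf_{p\in(a,b)} \frac{\|u\|_p^p}{p\cdot 2^p\cdot \psi^p(p)}.$$ Then for all $x,y$ in the closed unit ball $B[G\psi[a,b]] = \{f\in G\psi: \|f\|G\psi\le 1\}$, $$\|x+y\|G\psi \le 2 - \theta[G\psi[a,b]](x-y).$$
   Context: For a measurable $f:Z\to\mathbb{R}$ and $1\le p<\infty$, $\|f\|_p = \left(\int_Z |f(z)|^p\,\mu(dz)\right)^{1/p}$. Given $1\le a<b\le\infty$ and a function $\psi:(a,b)\to(0,\infty]$ (possibly infinite at some points) with $\inf_{p\in(a,b)}\psi(p)>0$, the Grand Lebesgue Space $G\psi[a,b]$ consists of all real measurable functions $f$ on $Z$ with finite norm $\|f\|G\psi[a,b] := \sup_{p\in(a,b)} \|f\|_p/\psi(p)$, using the convention $C/\infty := 0$. *)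

(* Defs.v *)
From HB Require Import structures.
From mathcomp Require Import all_boot all_order all_algebra.
From mathcomp Require Import all_classical all_reals all_analysis.
Set Implicit Arguments. Unset Strict Implicit. Unset Printing Implicit Defensive.
Import Order.TTheory GRing.Theory Num.Theory.
Local Open Scope classical_set_scope.
Local Open Scope ring_scope.
Local Open Scope ereal_scope.

Definition nontrivial_measure {d} {T : measurableType d} {R : realType}
  (mu : {measure set T -> \bar R}) : Prop :=
  exists A, measurable A /\ 0 < mu A.

Definition atomless {d} {T : measurableType d} {R : realType}
  (mu : {measure set T -> \bar R}) : Prop :=
  forall A, measurable A -> 0 < mu A ->
    exists B, [/\ measurable B, B `<=` A, 0 < mu B & mu B < mu A].

(* ||f||_p / psi(p), with the convention C / +oo = 0 *)
Definition gls_ratio {d} {T : measurableType d} {R : realType}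
  (mu : {measure set T -> \bar R}) (psi : R -> \bar R) (f : T -> R) (p : R)
  : \bar R :=
  if psi p == +oo then 0
  else Lnorm mu p%:E (EFin \o f) * ((fine (psi p))^-1)%:E.

Definition gls_norm {d} {T : measurableType d} {R : realType}
  (mu : {measure set T -> \bar R}) (a b : R) (psi : R -> \bar R) (f : T -> R)
  : \bar R :=
  ereal_sup [set gls_ratio mu psi f p | p in `]a, b[%classic].

Definition in_gls {d} {T : measurableType d} {R : realType}
  (mu : {measure set T -> \bar R}) (a b : R) (psi : R -> \bar R) (f : T -> R)
  : Prop :=
  measurable_fun setT f /\ gls_norm mu a b psi f < +oo.

Definition in_gls_ball {d} {T : measurableType d} {R : realType}
  (mu : {measure set T -> \bar R}) (a b : R) (psi : R -> \bar R) (f : T -> R)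
  : Prop :=
  measurable_fun setT f /\ gls_norm mu a b psi f <= 1.

Definition gls_theta_term {d} {T : measurableType d} {R : realType}
  (mu : {measure set T -> \bar R}) (psi : R -> \bar R) (u : T -> R) (p : R)
  : \bar R :=
  if psi p == +oo then 0
  else (Lnorm mu p%:E (EFin \o u)) `^ p *
       ((p * 2 `^ p * (fine (psi p)) `^ p)%R^-1)%:E.

Definition gls_theta {d} {T : measurableType d} {R : realType}
  (mu : {measure set T -> \bar R}) (a b : R) (psi : R -> \bar R) (u : T -> R)
  : \bar R :=
  ereal_inf [set gls_theta_term mu psi u p | p in `]a, b[%classic].

(* Main.v *)
Require Import Defs.
From HB Require Import structures.
From mathcomp Require Import all_boot all_order all_algebra.
From mathcomp Require Import all_classical all_reals all_analysis.
From mathcomp Require Import ring lra.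
From mathcomp Require Import measurable_realfun.
Import Order.TTheory GRing.Theory Num.Theory.
Local Open Scope classical_set_scope.
Local Open Scope ring_scope.
Section R1.
Variable R : realType.

Lemma superadd (r A B : R) : 1 <= r -> 0 <= A -> 0 <= B ->
  A `^ r + B `^ r <= (A + B) `^ r.
Proof.
move=> r1 A0 B0.
have r0 : r != 0 by rewrite gt_eqF // (lt_le_trans _ r1).
have [->|An0] := eqVneq A 0; first by rewrite powR0 // !add0r.
have [->|Bn0] := eqVneq B 0; first by rewrite powR0 // !addr0.
have Ap : 0 < A by rewrite lt_neqAle eq_sym An0.
have Bp : 0 < B by rewrite lt_neqAle eq_sym Bn0.
set S := A + B.
have Sp : 0 < S by rewrite addr_gt0.
have HA : A = (A / S) * S by rewrite mulfVK // gt_eqF.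
have HB : B = (B / S) * S by rewrite mulfVK // gt_eqF.
have t1 : A / S <= 1 by rewrite ler_pdivrMr // mul1r lerDl.
have t2 : B / S <= 1 by rewrite ler_pdivrMr // mul1r lerDr.
rewrite {1}HA {1}HB.
apply: le_trans (lerD (ge1r_powRZ _ _ r1) (ge1r_powRZ _ _ r1)) _.
- by rewrite divr_gt0 // t1.
- exact: ltW.
- by rewrite divr_gt0 // t2.
- exact: ltW.
by rewrite -mulrDl -mulrDl mulfV ?gt_eqF // mul1r.
Qed.

Lemma half_convex (p A B : R) : 1 <= p -> 0 <= A -> 0 <= B ->
  (2^-1 * A + 2^-1 * B) `^ p <= 2^-1 * A `^ p + 2^-1 * B `^ p.
Proof.
move=> p1 A0 B0.
rewrite {2 4}(_ : 2^-1 = 1 - 2^-1); last by rewrite {2}(splitr 1) div1r addrK.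
by apply: (convex_powR p1 (Itv01 _ _)) => //=;
  rewrite ?inE/= ?in_itv/= ?A0 ?B0 // ?invr_ge0// invf_le1 ?ler1n.
Qed.

Lemma abs_powR (u p : R) : `|u| `^ p = (u ^+ 2) `^ (p / 2).
Proof.
rewrite -real_normK ?num_real // -powR_mulrn // -powRrM.
by rewrite mulrC mulfVK // pnatr_eq0.
Qed.

Lemma clarkson (p u v : R) : 2 <= p ->
  `|u + v| `^ p + `|u - v| `^ p <= 2 `^ (p - 1) * (`|u| `^ p + `|v| `^ p).
Proof.
move=> p2.
have r1 : 1 <= p / 2 by rewrite ler_pdivlMr // mul1r.
rewrite !abs_powR.
apply: (le_trans (superadd _ _ _ r1 (sqr_ge0 _) (sqr_ge0 _))).
have -> : (u + v) ^+ 2 + (u - v) ^+ 2 = 2^-1 * (4 * u ^+ 2) + 2^-1 * (4 * v ^+ 2).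
  by rewrite !sqrrD !sqrrN; field.
apply: (le_trans (half_convex _ _ _ r1 (mulr_ge0 _ (sqr_ge0 _)) (mulr_ge0 _ (sqr_ge0 _)))) => //.
have h4 : 2^-1 * 4 `^ (p / 2) = 2 `^ (p - 1) :> R.
  rewrite (_ : 4 = 2 `^ 2); last by rewrite powR_mulrn // expr2 -natrM.
  rewrite -powRrM (mulrC 2 (p / 2)) mulfVK ?pnatr_eq0 // powRB; last by apply/implyP => _; rewrite pnatr_eq0.
  by rewrite powRr1 // mulrC.
rewrite [(4 * u ^+ 2) `^ _]powRM ?sqr_ge0 // [(4 * v ^+ 2) `^ _]powRM ?sqr_ge0 // !mulrA h4 -mulrDr //.
Qed.

Lemma key (p s t : R) : 1 <= p -> 0 <= s -> 0 <= t -> s + t <= 1 ->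
  s `^ (p^-1) <= 1 - t / (2 * p).
Proof.
move=> p1 s0 t0 st.
have p0 : 0 < p by rewrite (lt_le_trans _ p1).
have t1 : t <= 1 by rewrite (le_trans _ st) // lerDr.
set c := 1 - t / (2 * p).
have hq : t / (2 * p) <= 2^-1.
  rewrite ler_pdivrMr ?mulr_gt0 // mulrA mulVf ?pnatr_eq0 // mul1r.
  exact: le_trans t1 p1.
have hq0 : 0 <= t / (2 * p) by rewrite divr_ge0 // mulr_ge0 // ltW.
have hc : 2^-1 <= c.
  rewrite /c; move: hq; set q := t / (2 * p); lra.
have c0 : 0 < c by rewrite (lt_le_trans _ hc) // invr_gt0.
suff sc : s <= c `^ p.
  have pi0 : 0 <= p^-1 by rewrite invr_ge0 ltW.
  have hs : s \in Num.nneg by rewrite nnegrE.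
  have hcp : c `^ p \in Num.nneg by rewrite nnegrE powR_ge0.
  apply: le_trans (@ge0_ler_powR R (p^-1) pi0 s (c `^ p) hs hcp sc) _.
  by rewrite -powRrM mulfV ?gt_eqF // powRr1 // ltW.
apply: (le_trans (y := 1 - t)); first by rewrite lerBrDr.
apply: le_trans (expR_ge1Dx _) _.
rewrite /powR gt_eqF // ler_expR.
have hw : ln c^-1 <= c^-1 - 1.
  have h := @le_ln1Dx R (c^-1 - 1).
  rewrite [1 + _]addrC subrK in h; apply: h.
  have : 0 < c^-1 by rewrite invr_gt0.
  set ci := c^-1; lra.
rewrite lnV ?posrE // in hw.
have ci2 : c^-1 <= 2.
  rewrite -div1r ler_pdivrMr //; move: hc; lra.
have hw2 : c^-1 - 1 <= t / p.
  have -> : c^-1 - 1 = c^-1 * (1 - c) by rewrite mulrBr mulr1 mulVf ?gt_eqF.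
  apply: le_trans (ler_wpM2r _ ci2) _.
    by rewrite /c opprB addrC subrK.
  rewrite /c opprB addrC subrK (_ : 2 * (t / (2 * p)) = t / p) //.
  by field; rewrite gt_eqF.
have h : - (t / p) <= ln c by rewrite lerNl; exact: le_trans hw hw2.
have := ler_wpM2l (ltW p0) h.
by rewrite mulrN (mulrC p (t / p)) divfK ?gt_eqF.
Qed.

Lemma final_real (p S D r : R) : 1 <= p -> 0 < r -> 0 <= S -> 0 <= D ->
  S + D <= 2 `^ p * r `^ p ->
  S `^ (p^-1) * r^-1 <= 2 - D * (p * 2 `^ p * r `^ p)^-1.
Proof.
move=> p1 r0 S0 D0 SD.
have p0 : 0 < p by rewrite (lt_le_trans _ p1).
have KE : 2 `^ p * r `^ p = (2 * r) `^ p by rewrite powRM // ltW.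
rewrite KE in SD.
set K := (2 * r) `^ p in SD KE.
have -> : (p * 2 `^ p * r `^ p = p * K)%R by rewrite -KE mulrA.
have K0 : 0 < K by rewrite powR_gt0 // mulr_gt0.
have hk := @key p (S / K) (D / K) p1 (divr_ge0 S0 (ltW K0)) (divr_ge0 D0 (ltW K0)).
have : S / K + D / K <= 1 by rewrite -mulrDl ler_pdivrMr // mul1r.
move=> /hk {}hk.
have SE : S `^ p^-1 = (S / K) `^ p^-1 * (2 * r).
  rewrite {1}(_ : S = S / K * K); last by rewrite divfK // gt_eqF.
  rewrite powRM; last 2 first.
  - by rewrite divr_ge0 // ltW.
  - exact: ltW.
  by rewrite /K -powRrM mulfV ?gt_eqF // powRr1 // mulr_ge0 // ltW.
rewrite SE.
have e1 : (S / K) `^ p^-1 * (2 * r) * r^-1 = 2 * (S / K) `^ p^-1.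
  by field; rewrite gt_eqF.
have e2 : D * (p * K)^-1 = 2 * (D / K / (2 * p)).
  by field; rewrite !gt_eqF.
rewrite e1 e2; move: hk; set u := (S / K) `^ p^-1; set w := D / K / (2 * p); lra.
Qed.
End R1.

Section M.
Context d (T : measurableType d) (R : realType) (mu : {measure set T -> \bar R}).
Local Open Scope ereal_scope.

Lemma mpow (p : R) (h : T -> R) : measurable_fun setT h ->
  measurable_fun setT (fun x => ((`|h x| `^ p)%R)%:E).
Proof.
move=> mh; apply/measurable_EFinP.
apply: (@measurableT_comp _ _ _ _ _ _ (@powR R ^~ p)) => //.
exact: measurableT_comp.
Qed.

Lemma LnormE (p : R) (f : T -> R) : p != 0%R ->
  Lnorm mu p%:E (EFin \o f) `^ p = \int[mu]_x ((`|f x| `^ p)%R)%:E.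
Proof.
by move=> p0; rewrite poweR_Lnorm.
Qed.

Lemma clarkson_int (p : R) (f g : T -> R) : (2 <= p)%R ->
  measurable_fun setT f -> measurable_fun setT g ->
  \int[mu]_x ((`|f x + g x| `^ p)%R)%:E + \int[mu]_x ((`|f x - g x| `^ p)%R)%:E
  <= (2 `^ (p - 1))%:E * (\int[mu]_x ((`|f x| `^ p)%R)%:E + \int[mu]_x ((`|g x| `^ p)%R)%:E).
Proof.
move=> p2 mf mg.
have mfg : measurable_fun setT (fun x => f x + g x)%R by exact: measurable_funD.
have mfmg : measurable_fun setT (fun x => f x - g x)%R by exact: measurable_funB.
have P0 : forall (h : T -> R) x, setT x -> 0 <= ((`|h x| `^ p)%R)%:E.
  by move=> h x _; rewrite lee_fin powR_ge0.
rewrite -(ge0_integralD mu measurableT (P0 f) (mpow p f mf) (P0 g) (mpow p g mg)).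
rewrite -(ge0_integralD mu measurableT (P0 _) (mpow p _ mfg) (P0 _) (mpow p _ mfmg)).
rewrite -ge0_integralZl_EFin; last 3 first.
- by move=> x _; rewrite adde_ge0 // lee_fin powR_ge0.
- by apply: emeasurable_funD; exact: mpow.
- exact: powR_ge0.
apply: ge0_le_integral => //.
- by move=> x _; rewrite adde_ge0 // lee_fin powR_ge0.
- by apply: emeasurable_funD; exact: mpow.
- by apply: emeasurable_funM => //; apply: emeasurable_funD; exact: mpow.
move=> x _; rewrite -!EFinD -EFinM lee_fin; exact: clarkson.
exact: measurableT.
Qed.

Lemma step (p r : R) (f g : T -> R) : (2 < p)%R -> (0 < r)%R ->
  measurable_fun setT f -> measurable_fun setT g ->
  Lnorm mu p%:E (EFin \o f) <= r%:E -> Lnorm mu p%:E (EFin \o g) <= r%:E ->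
  Lnorm mu p%:E (EFin \o (fun z => f z + g z)%R) * (r^-1)%:E <=
  2 - Lnorm mu p%:E (EFin \o (fun z => f z - g z)%R) `^ p * ((p * 2 `^ p * r `^ p)^-1)%:E.
Proof.
move=> p2 r0 mf mg Nf Ng.
have p0' : (0 < p)%R by rewrite (lt_trans _ p2).
have p0 : p != 0%R by rewrite gt_eqF.
have Ih : forall h : T -> R, Lnorm mu p%:E (EFin \o h) <= r%:E ->
    \int[mu]_x ((`|h x| `^ p)%R)%:E <= (r `^ p)%:E.
  move=> h Nh; rewrite -LnormE // -poweR_EFin; apply: gt0_ler_poweR => //.
  - exact: ltW.
  - by rewrite in_itv /= Lnorm_ge0 leey.
  - by rewrite in_itv /= lee_fin ltW // leey.
have If := Ih f Nf; have Ig := Ih g Ng.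
have C := @clarkson_int p f g (ltW p2) mf mg.
set A := \int[mu]_x ((`|f x + g x| `^ p)%R)%:E in C.
set B := \int[mu]_x ((`|f x - g x| `^ p)%R)%:E in C.
have hb : A + B <= (2 `^ p * r `^ p)%:E.
  apply: le_trans C _.
  apply: le_trans (lee_wpmul2l _ (leeD If Ig)) _; first by rewrite lee_fin powR_ge0.
  rewrite -EFinD -EFinM lee_fin.
  have -> : (2 `^ p = 2 `^ (p - 1) * 2 :> R)%R.
    rewrite -{3}(@powRr1 R 2) // -powRD ?subrK //.
    by apply/implyP => _; rewrite pnatr_eq0.
  have -> : (r `^ p + r `^ p = 2 * r `^ p)%R by ring.
  by rewrite mulrA.
have A0 : 0 <= A by apply: integral_ge0 => x _; rewrite lee_fin powR_ge0.
have B0 : 0 <= B by apply: integral_ge0 => x _; rewrite lee_fin powR_ge0.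
have Afin : A \is a fin_num.
  rewrite ge0_fin_numE //; apply: le_lt_trans (ltry (2 `^ p * r `^ p)%R).
  by apply: le_trans hb; rewrite leeDl.
have Bfin : B \is a fin_num.
  rewrite ge0_fin_numE //; apply: le_lt_trans (ltry (2 `^ p * r `^ p)%R).
  by apply: le_trans hb; rewrite leeDr.
have NE : forall h : T -> R, Lnorm mu p%:E (EFin \o h) =
    (Lnorm mu p%:E (EFin \o h) `^ p) `^ p^-1.
  by move=> h; rewrite -poweRrM mulfV // poweRe1 // Lnorm_ge0.
rewrite NE !LnormE // -/A -/B -(fineK Afin) -(fineK Bfin) poweR_EFin.
rewrite -(fineK Afin) -(fineK Bfin) -EFinD lee_fin in hb.
rewrite -!EFinM -EFinB lee_fin; apply: final_real => //.
- by apply: ltW; apply: lt_trans p2; rewrite ltr1n.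
- by rewrite fine_ge0.
- by rewrite fine_ge0.
Qed.
End M.

Local Open Scope ereal_scope.

Theorem theorem3p1 (d : measure_display) (T : measurableType d) (R : realType)
  (mu : {measure set T -> \bar R})
  (mu_nontriv : nontrivial_measure mu) (mu_atomless : atomless mu)
  (a b : R) (ha : (2 < a)%R) (hab : (a < b)%R)
  (psi : R -> \bar R)
  (psi_pos : forall p, p \in `]a, b[ -> 0 < psi p)
  (psi_inf : 0 < ereal_inf [set psi p | p in `]a, b[%classic])
  (x y : T -> R) :
  in_gls_ball mu a b psi x -> in_gls_ball mu a b psi y ->
  gls_norm mu a b psi (fun z => x z + y z)%R <= 2 - gls_theta mu a b psi (fun z => x z - y z)%R.
Proof.
move=> [mx nx] [my ny].
apply: ge_ereal_sup => _ [p pab <-].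
have thp : gls_theta mu a b psi (fun z => x z - y z)%R <=
    gls_theta_term mu psi (fun z => x z - y z)%R p.
  by apply: ereal_inf_lbound; exists p.
apply: le_trans _ (leeB (lexx _) thp).
have pin : p \in `]a, b[ by [].
have p2 : (2 < p)%R.
  by move: pin; rewrite in_itv /= => /andP[ap _]; exact: lt_trans ap.
have hxr : gls_ratio mu psi x p <= 1.
  by apply: le_trans nx; apply: ereal_sup_ubound; exists p.
have hyr : gls_ratio mu psi y p <= 1.
  by apply: le_trans ny; apply: ereal_sup_ubound; exists p.
move: hxr hyr; rewrite /gls_ratio /gls_theta_term.
case: eqP => [_ _ _|hpsi]; first by rewrite sube0 lee_fin ler0n.
have [r psiE] : exists r, psi p = r%:E.
  by move: (psi_pos p pin) hpsi; case: (psi p) => // r; exists r.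
have r0 : (0 < r)%R by rewrite -lte_fin -psiE psi_pos.
rewrite psiE /= => hx hy.
rewrite lee_pdivrMr // mul1e in hx.
rewrite lee_pdivrMr // mul1e in hy.
exact: step.
Qed.
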